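(* Let $\varphi\colon A\to B$ and $\psi\colon B\to C$ be local homomorphisms of noetherian local rings with $\varphi$ surjective. Then $\operatorname{rd}(\psi\circ\varphi)=\operatorname{rd}(\varphi)+\operatorname{rd}(\psi)$.
   Context: All rings are commutative and noetherian with identity. A local homomorphism $\varphi\colon (A,m,K)\to(B,n,L)$ satisfies $\varphi(m)\subseteq n$. The regularity defect $\operatorname{rd}(\varphi)$ is the $L$-dimension of the kernel of the natural $L$-linear map $m/m^2\otimes_K L\to n/n^2$, $\bar x\otimes\bar b\mapsto \overline{\varphi(x)b}$. *)

(* Defs.v *)
From HB Require Import structures.
From mathcomp Require Import all_boot all_algebra.
Set Implicit Arguments. Unset Strict Implicit. Unset Printing Implicit Defensive.
Import GRing.Theory.
Local Open Scope ring_scope.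

Definition maxideal (R : comUnitRingType) (x : R) : Prop := ~~ (x \is a GRing.unit).

Definition is_ideal (R : comUnitRingType) (I : R -> Prop) : Prop :=
  [/\ I 0, (forall x y, I x -> I y -> I (x + y)) & (forall a x, I x -> I (a * x))].

Definition in_ideal_gen (R : comUnitRingType) (s : seq R) (x : R) : Prop :=
  exists c : 'I_(size s) -> R, x = \sum_(i < size s) c i * s`_i.

Definition noetherian (R : comUnitRingType) : Prop :=
  forall I : R -> Prop, is_ideal I ->
    exists s : seq R, forall x, I x <-> in_ideal_gen s x.

(* Local ring: the nonunits form an ideal (closure under addition suffices). *)
Definition local_ring (R : comUnitRingType) : Prop :=
  forall x y : R, maxideal x -> maxideal y -> maxideal (x + y).

Definition local_hom (A B : comUnitRingType) (f : A -> B) : Prop :=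
  forall x, maxideal x -> maxideal (f x).

Definition in_maxideal_sq (R : comUnitRingType) (x : R) : Prop :=
  exists (k : nat) (u v : 'I_k -> R),
    [/\ forall i, maxideal (u i), forall i, maxideal (v i)
      & x = \sum_(i < k) u i * v i].

(* x_1, ..., x_e in m whose classes form a K-basis of m/m^2. *)
Definition cotangent_basis (A : comUnitRingType) (e : nat) (x : 'I_e -> A) : Prop :=
  [/\ forall i, maxideal (x i),
      (forall y, maxideal y ->
         exists a : 'I_e -> A, in_maxideal_sq (y - \sum_(i < e) a i * x i))
    & (forall a : 'I_e -> A, in_maxideal_sq (\sum_(i < e) a i * x i) ->
         forall i, maxideal (a i))].

(* Given the basis x of m/m^2, m/m^2 (x)_K L is identified with L^e, an element
   being represented by lifts v : 'I_e -> B of its coordinates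
   (sum_i xbar_i (x) vbar_i).  It lies in the kernel of the natural map to
   n/n^2 iff sum_i f(x_i) v_i lies in n^2 (well defined modulo n). *)
Definition in_rd_kernel (A B : comUnitRingType) (f : A -> B) (e : nat)
    (x : 'I_e -> A) (v : 'I_e -> B) : Prop :=
  in_maxideal_sq (\sum_(i < e) v i * f (x i)).

(* The kernel has L-dimension d: it has an L-basis of d vectors
   (represented by lifts w j to B^e), with L = B/n. *)
Definition rd_kernel_dim (A B : comUnitRingType) (f : A -> B) (e : nat)
    (x : 'I_e -> A) (d : nat) : Prop :=
  exists w : 'I_d -> 'I_e -> B,
    [/\ forall j, in_rd_kernel f x (w j),
        (forall c : 'I_d -> B,
           (forall i, maxideal (\sum_(j < d) c j * w j i)) ->
           forall j, maxideal (c j))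
      & (forall v : 'I_e -> B, in_rd_kernel f x v ->
           exists c : 'I_d -> B,
             forall i, maxideal (v i - \sum_(j < d) c j * w j i))].

Definition rd_is (A B : comUnitRingType) (f : A -> B) (d : nat) : Prop :=
  (exists (e : nat) (x : 'I_e -> A), cotangent_basis x) /\
  (forall (e : nat) (x : 'I_e -> A), cotangent_basis x -> rd_kernel_dim f x d).

(* Main.v *)
Require Import Defs.
From HB Require Import structures.
From mathcomp Require Import all_boot all_algebra.
From mathcomp Require Import ring.
From Stdlib Require Import Classical.
Set Implicit Arguments. Unset Strict Implicit. Unset Printing Implicit Defensive.
Import GRing.Theory.
Local Open Scope ring_scope.
Local Open Scope quotient_scope.

Definition nonunitp (R : comUnitRingType) : pred R := fun x => x \notin GRing.unit.

Lemma nonunit_idealr (R : comUnitRingType) (h : local_ring R) :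
  @idealr_closed R (@nonunitp R).
Proof.
split.
- by rewrite unfold_in /nonunitp unitr0.
- by rewrite unfold_in /nonunitp unitr1.
- move=> a u v hu hv; rewrite unfold_in /nonunitp; rewrite unfold_in /nonunitp in hu hv.
  by apply: h => //; rewrite /maxideal unitrM negb_and hu orbT.
Qed.

Definition mideal (R : comUnitRingType) (h : local_ring R) : idealr R :=
  HB.pack (@nonunitp R) (isIdealr.Build R (@nonunitp R) (nonunit_idealr h)).

Definition resf (R : comUnitRingType) (h : local_ring R) := {ideal_quot (mideal h)}.
HB.instance Definition _ R h := GRing.ComNzRing.on (@resf R h).
Section Res.
Variables (R : comUnitRingType) (h : local_ring R).
Definition res (x : R) : resf h := \pi_(resf h) x.
HB.instance Definition _ := GRing.RMorphism.copy res (\pi_(resf h)).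

Lemma res_eq0 x : (res x == 0) = ~~ (x \is a GRing.unit).
Proof.
have := @Quotient.idealrBE R (mideal h) x 0.
rewrite subr0 => E.
have r0 : res 0 = 0 by rewrite /res; apply: pi_zeror.
rewrite -r0 /res -E. done.
Qed.
End Res.

Section ResLemmas.
Variables (R : comUnitRingType) (h : local_ring R).
Lemma resM (x y : R) : res h (x * y) = res h x * res h y.
Proof. exact: rmorphM. Qed.
Lemma resB (x y : R) : res h (x - y) = res h x - res h y.
Proof. exact: rmorphB. Qed.
Lemma res_sum (I : finType) (F : I -> R) : res h (\sum_i F i) = \sum_i res h (F i).
Proof. exact: rmorph_sum. Qed.
Lemma res1 : res h 1 = 1.
Proof. exact: rmorph1. Qed.
End ResLemmas.

Section Field.
Variables (R : comUnitRingType) (h : local_ring R).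
Lemma resK (q : resf h) : res h (repr q) = q.
Proof. exact: reprK. Qed.
Definition resinv (q : resf h) : resf h := res h ((repr q)^-1).
Lemma res_mulVf q : q != 0 -> resinv q * q = 1.
Proof.
rewrite -{1}(resK q) res_eq0 negbK => U.
by rewrite /resinv -{2}(resK q) -rmorphM mulVr // rmorph1.
Qed.
Lemma res_invr0 : resinv 0 = 0.
Proof.
apply/eqP; rewrite /resinv res_eq0 unitrV -res_eq0 resK //.
Qed.
End Field.
HB.instance Definition _ R h := GRing.ComNzRing_isField.Build (@resf R h) (@res_mulVf R h) (@res_invr0 R h).

Section Ring.
Variable R : comUnitRingType.
Implicit Types x y a : R.

Lemma max0 : @maxideal R 0.
Proof. by rewrite /maxideal unitr0. Qed.

Lemma maxM a x : maxideal x -> maxideal (a * x).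
Proof. by rewrite /maxideal unitrM negb_and => ->; rewrite orbT. Qed.

Lemma maxMr a x : maxideal x -> maxideal (x * a).
Proof. by rewrite mulrC; apply: maxM. Qed.

Lemma maxN x : maxideal x -> maxideal (- x).
Proof. by rewrite /maxideal unitrN. Qed.

Lemma m2_0 : @in_maxideal_sq R 0.
Proof. by exists 0%N, (fun _ => 0), (fun _ => 0); split => //; [case|case|rewrite big_ord0]. Qed.

Lemma m2_add x y : in_maxideal_sq x -> in_maxideal_sq y -> in_maxideal_sq (x + y).
Proof.
case=> k [u] [v] [hu hv ->]; case=> k' [u'] [v'] [hu' hv' ->].
exists (k + k')%N, (fun i => match split i with inl j => u j | inr j => u' j end),
  (fun i => match split i with inl j => v j | inr j => v' j end); split.
- by move=> i; case: (split i).
- by move=> i; case: (split i).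
rewrite big_split_ord /=; congr (_ + _); apply: eq_bigr => i _.
  by rewrite -[lshift _ i]/(unsplit (inl i)) unsplitK.
by rewrite -[rshift _ i]/(unsplit (inr i)) unsplitK.
Qed.

Lemma m2_mul a x : in_maxideal_sq x -> in_maxideal_sq (a * x).
Proof.
case=> k [u] [v] [hu hv ->]; exists k, (fun i => a * u i), v; split => //.
  by move=> i; apply: maxM.
by rewrite mulr_sumr; apply: eq_bigr => i _; rewrite mulrA.
Qed.

Lemma m2_opp x : in_maxideal_sq x -> in_maxideal_sq (- x).
Proof. by move=> H; rewrite -mulN1r; apply: m2_mul. Qed.

Lemma m2_sub x y : in_maxideal_sq x -> in_maxideal_sq y -> in_maxideal_sq (x - y).
Proof. by move=> hx hy; apply: m2_add => //; apply: m2_opp. Qed.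

Lemma m2_sum (I : finType) (F : I -> R) :
  (forall i, in_maxideal_sq (F i)) -> in_maxideal_sq (\sum_i F i).
Proof.
move=> H; elim/big_ind: _ => //; [exact: m2_0 | exact: m2_add].
Qed.

Lemma m2_prod x y : maxideal x -> maxideal y -> in_maxideal_sq (x * y).
Proof.
move=> hx hy; exists 1%N, (fun _ => x), (fun _ => y); split; try by move=> _.
by rewrite big_ord1.
Qed.

Lemma m2_trans x y z : in_maxideal_sq (x - y) -> in_maxideal_sq (y - z) ->
  in_maxideal_sq (x - z).
Proof.
move=> h1 h2; have := m2_add h1 h2; by rewrite addrA subrK.
Qed.

Lemma m2_eq x y : x = y -> in_maxideal_sq (x - y).
Proof. by move=> ->; rewrite subrr; exact: m2_0. Qed.

End Ring.

Section LocalRing.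
Variables (R : comUnitRingType) (h : local_ring R).

Lemma maxD (x y : R) : maxideal x -> maxideal y -> maxideal (x + y).
Proof. exact: h. Qed.

Lemma maxB (x y : R) : maxideal x -> maxideal y -> maxideal (x - y).
Proof. by move=> hx hy; apply: maxD => //; apply: maxN. Qed.

Lemma max_sum (I : finType) (F : I -> R) :
  (forall i, maxideal (F i)) -> maxideal (\sum_i F i).
Proof. move=> H; apply: big_ind; [exact: max0 | exact: maxD | move=> i _; exact: H]. Qed.

Lemma maxE (x : R) : maxideal x <-> res h x = 0.
Proof. by rewrite /maxideal -res_eq0; split => /eqP. Qed.

End LocalRing.

Lemma m2_hom (S T : comUnitRingType) (f : {rmorphism S -> T}) (x : S) :
  local_hom f -> in_maxideal_sq x -> in_maxideal_sq (f x).
Proof.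
move=> hf [k [u [v [hu hv ->]]]]; exists k, (fun i => f (u i)), (fun i => f (v i)).
split; [by move=> i; apply: hf | by move=> i; apply: hf|].
by rewrite rmorph_sum; apply: eq_bigr => i _; rewrite rmorphM.
Qed.

Definition coords (T : comUnitRingType) (n e : nat) (z : 'I_n -> T) (y : 'I_e -> T)
  (X : 'M[T]_(e, n)) : Prop := forall i, in_maxideal_sq (y i - \sum_k X i k * z k).

Lemma coords_exist (T : comUnitRingType) n e (z : 'I_n -> T) (y : 'I_e -> T) :
  cotangent_basis z -> (forall i, maxideal (y i)) -> exists X, coords z y X.
Proof.
case=> _ hsp _ hy.
have [a Ha] := fin_all_exists (fun i => hsp (y i) (hy i)).
by exists (\matrix_(i, k) a i k) => i; rewrite /coords; under eq_bigr do rewrite mxE.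
Qed.

Lemma coords_id (T : comUnitRingType) n (z : 'I_n -> T) : coords z z 1%:M.
Proof.
move=> i; apply: m2_eq; rewrite (bigD1 i) //= mxE eqxx mul1r big1 ?addr0 //.
by move=> k /negPf; rewrite mxE eq_sym => ->; rewrite mul0r.
Qed.

Lemma coords_comp (T : comUnitRingType) n e p (z : 'I_n -> T) (y : 'I_e -> T)
  (w : 'I_p -> T) X Y : coords z y X -> coords y w Y -> coords z w (Y *m X).
Proof.
move=> hX hY j.
have -> : w j - \sum_k (Y *m X) j k * z k =
  (w j - \sum_i Y j i * y i) + \sum_i Y j i * (y i - \sum_k X i k * z k).
  have E : \sum_i Y j i * (y i - \sum_k X i k * z k) =
     \sum_i Y j i * y i - \sum_k (Y *m X) j k * z k.
    under eq_bigr do rewrite mulrBr.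
    rewrite sumrB; congr (_ - _).
    under eq_bigr do rewrite mulr_sumr.
    rewrite exchange_big /=; apply: eq_bigr => k _.
    by rewrite mxE mulr_suml; apply: eq_bigr => i _; rewrite mulrA.
  by rewrite E addrA subrK.
apply: m2_add => //; apply: m2_sum => i; apply: m2_mul; exact: hX.
Qed.

Lemma coords_hom (S T : comUnitRingType) (f : {rmorphism S -> T}) n e
  (z : 'I_n -> S) (y : 'I_e -> S) X :
  local_hom f -> coords z y X -> coords (f \o z) (f \o y) (map_mx f X).
Proof.
move=> hf hX i.
suff -> : (f \o y) i - \sum_k map_mx f X i k * (f \o z) k
   = f (y i - \sum_k X i k * z k) by apply: m2_hom.
rewrite rmorphB rmorph_sum /=; congr (_ - _); apply: eq_bigr => k _.
by rewrite rmorphM mxE.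
Qed.

Lemma basis_m2 (T : comUnitRingType) n (z : 'I_n -> T) (c : 'I_n -> T) :
  cotangent_basis z -> in_maxideal_sq (\sum_k c k * z k) <-> forall k, maxideal (c k).
Proof.
case=> hz _ hind; split; first exact: hind.
by move=> hc; apply: m2_sum => k; apply: m2_prod.
Qed.

Lemma coords_uniq (T : comUnitRingType) (h : local_ring T) n e (z : 'I_n -> T)
  (y : 'I_e -> T) X X' : cotangent_basis z -> coords z y X -> coords z y X' ->
  map_mx (res h) X = map_mx (res h) X'.
Proof.
move=> hz hX hX'; apply/matrixP => i k; rewrite !mxE.
apply/eqP; rewrite -subr_eq0 -rmorphB; apply/eqP/(maxE h).
have := m2_sub (hX' i) (hX i).
have -> : y i - \sum_k X' i k * z k - (y i - \sum_k X i k * z k)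
   = \sum_k (X i k - X' i k) * z k.
  rewrite opprB addrC addrA subrK -sumrB; apply: eq_bigr => l _; by rewrite mulrBl.
by move/(basis_m2 _ hz); apply.
Qed.

Definition rowmx (T : Type) e (v : 'I_e -> T) : 'M[T]_(1, e) := \matrix_(j < 1, i < e) v i.

Lemma kernel_dim_of (S T : comUnitRingType) (h : local_ring T) (f : S -> T) n e
  (x : 'I_e -> S) (M : 'M[resf h]_(e, n)) :
  (forall v, in_rd_kernel f x v <-> map_mx (res h) (rowmx v) *m M = 0) ->
  rd_kernel_dim f x (e - \rank M).
Proof.
move=> hker; rewrite -mxrank_ker.
set K := kermx M; set Bm := row_base K.
have resK' : forall q : resf h, res h (repr q) = q by move=> q; exact: resK.
exists (fun j i => repr (Bm j i)); split.
- move=> j; apply/hker.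
  have -> : map_mx (res h) (rowmx (fun i => repr (Bm j i))) = row j Bm.
    by apply/matrixP => a b; rewrite !mxE resK'.
  apply/sub_kermxP; apply: submx_trans (row_sub j Bm) _.
  by rewrite /Bm eq_row_base.
- move=> c hc.
  have u0 : (\row_j res h (c j)) *m Bm = 0.
    apply/matrixP => a i; rewrite !mxE.
    apply: (etrans _ ((maxE h _).1 (hc i))); rewrite res_sum.
    by apply: eq_bigr => j _; rewrite mxE resM resK'.
  move/eqP: u0; rewrite mulmx_free_eq0 ?row_base_free // => /eqP u0 j.
  by apply/(maxE h); move/matrixP: u0 => /(_ 0 j); rewrite !mxE.
- move=> v /hker /sub_kermxP; rewrite -/K -(eq_row_base K) -/Bm => /submxP [D hD].
  exists (fun j => repr (D 0 j)) => i; apply/(maxE h).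
  rewrite resB res_sum.
  move/matrixP: hD => /(_ 0 i); rewrite !mxE => ->.
  apply/eqP; rewrite subr_eq0; apply/eqP. apply: eq_bigr => j _; by rewrite resM !resK'.
Qed.

Lemma m2_congr (R : comUnitRingType) (x y : R) :
  in_maxideal_sq (x - y) -> (in_maxideal_sq x <-> in_maxideal_sq y).
Proof.
move=> hxy; split => H.
  by have := m2_sub H hxy; rewrite opprB addrC subrK.
by have := m2_add H hxy; rewrite addrC subrK.
Qed.

Lemma kernel_dim (S T : comUnitRingType) (h : local_ring T) (f : S -> T) n e
  (z : 'I_n -> T) (x : 'I_e -> S) (X : 'M[T]_(e, n)) :
  cotangent_basis z -> coords z (fun i => f (x i)) X ->
  rd_kernel_dim f x (e - \rank (map_mx (res h) X)).
Proof.
move=> hz hX; apply: kernel_dim_of => v.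
pose w := fun _ : 'I_1 => \sum_i v i * f (x i).
have hV : coords (fun i => f (x i)) w (rowmx v).
  move=> j; apply: m2_eq; rewrite /w; apply: eq_bigr => i _; by rewrite mxE.
have hc := m2_congr (coords_comp hX hV ord0).
rewrite -map_mxM /in_rd_kernel -/(w ord0).
split.
- move=> /hc /(basis_m2 _ hz) hk; apply/matrixP => a k; rewrite ord1 !mxE; apply/(maxE h); by move: (hk k); rewrite mxE.
- move=> h0; apply/hc/(basis_m2 _ hz) => k; apply/(maxE h); move/matrixP: h0 => /(_ 0 k); by rewrite !mxE.
Qed.

Lemma full_rank_mul (F : fieldType) p q r (P : 'M[F]_(p, q)) (L : 'M[F]_(q, p))
  (Y : 'M[F]_(q, r)) : L *m P = 1%:M -> \rank (P *m Y) = \rank Y /\ \rank P = q.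
Proof.
move=> hLP; have hf : row_full P by apply/row_fullP; exists L.
by split; [rewrite (eqmxMfull _ hf) | apply/eqP].
Qed.

Lemma dim_le (R : comUnitRingType) (h : local_ring R) e e' (x : 'I_e -> R)
  (x' : 'I_e' -> R) : cotangent_basis x -> cotangent_basis x' -> (e <= e')%N.
Proof.
move=> hx hx'.
have [X hX] : exists X, coords x' x X by apply: coords_exist => //; case: hx.
have [X' hX'] : exists X, coords x x' X by apply: coords_exist => //; case: hx'.
have hc := coords_comp hX' hX.
have := coords_uniq h hx hc (coords_id x).
rewrite map_mxM map_mx1 => E.
have := mxrankM_maxr (map_mx (res h) X) (map_mx (res h) X').
rewrite E mxrank1 => H; apply: leq_trans H _; exact: rank_leq_row.
Qed.

Lemma dim_unique (R : comUnitRingType) (h : local_ring R) e e' (x : 'I_e -> R)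
  (x' : 'I_e' -> R) : cotangent_basis x -> cotangent_basis x' -> e = e'.
Proof.
by move=> hx hx'; apply/eqP; rewrite eqn_leq (dim_le h hx hx') (dim_le h hx' hx).
Qed.

Lemma basis_from_span (R : comUnitRingType) (h : local_ring R) n (x : 'I_n -> R) :
  (forall i, maxideal (x i)) ->
  (forall y, maxideal y -> exists a : 'I_n -> R, in_maxideal_sq (y - \sum_i a i * x i)) ->
  exists e (x' : 'I_e -> R), cotangent_basis x'.
Proof.
elim: n x => [|n IH] x hx hsp.
  by exists 0%N, x; split; [case | exact: hsp | move=> a _ []].
case: (classic (forall a : 'I_n.+1 -> R, in_maxideal_sq (\sum_i a i * x i) ->
    forall i, maxideal (a i))) => hind.
  by exists n.+1, x; split.
have [a ha] : exists a : 'I_n.+1 -> R, ~ (in_maxideal_sq (\sum_i a i * x i) ->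
    forall i, maxideal (a i)) by apply: not_all_ex_not.
have [hs hj] : in_maxideal_sq (\sum_i a i * x i) /\ exists j, ~ maxideal (a j).
  split; first by apply: NNPP => H; apply: ha => /H.
  by apply: not_all_ex_not => H; apply: ha => _.
case: hj => j hj; have uj : a j \is a GRing.unit by apply: NNPP => H; apply: hj; apply/negP.
apply: (IH (fun i => x (lift j i))) => [i|y hy]; first exact: hx.
have [b hb] := hsp y hy.
exists (fun i => b (lift j i) - b j * (a j)^-1 * a (lift j i)).
have E : y - \sum_i (b (lift j i) - b j * (a j)^-1 * a (lift j i)) * x (lift j i) =
  (y - \sum_i b i * x i) + b j * ((a j)^-1 * \sum_i a i * x i).
  rewrite (bigD1_ord j) //= (bigD1_ord j) //=.
  under eq_bigr do rewrite mulrBl.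
  have S : \sum_(i < n) (b j / a j * a (lift j i) * x (lift j i)) =
      b j / a j * \sum_(i < n) a (lift j i) * x (lift j i).
    by rewrite mulr_sumr; apply: eq_bigr => i _; rewrite mulrA.
  rewrite sumrB S mulrDr (mulKr uj).
  ring.
rewrite E; apply: m2_add => //; do 2 apply: m2_mul; exact: hs.
Qed.

Lemma basis_exists (R : comUnitRingType) (h : local_ring R) :
  noetherian R -> exists e (x : 'I_e -> R), cotangent_basis x.
Proof.
move=> hn.
have hI : is_ideal (fun x : R => maxideal x).
  by split; [exact: max0 | exact: maxD h | move=> a x; exact: maxM].
have [s hs] := hn _ hI.
apply: (@basis_from_span R h (size s) (fun i => s`_i)).
- move=> i; apply/hs; exists (fun k => if k == i then 1 else 0).
  rewrite (bigD1 i) //= eqxx mul1r big1 ?addr0 // => k /negPf ->; by rewrite mul0r.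
- move=> y /hs [c ->]; exists c; exact: m2_eq.
Qed.

Lemma basis_max (R : comUnitRingType) e (x : 'I_e -> R) :
  cotangent_basis x -> forall i, maxideal (x i).
Proof. by case. Qed.

Lemma coords_ext (T : comUnitRingType) n e (z : 'I_n -> T) (y y' : 'I_e -> T) X :
  coords z y X -> (forall i, y i = y' i) -> coords z y' X.
Proof. by move=> hX E i; rewrite -E. Qed.

Lemma res_hom (B C : comUnitRingType) (hB : local_ring B) (hC : local_ring C)
  (psi : {rmorphism B -> C}) m n (X Y : 'M[B]_(m, n)) : local_hom psi ->
  map_mx (res hB) X = map_mx (res hB) Y ->
  map_mx (res hC) (map_mx psi X) = map_mx (res hC) (map_mx psi Y).
Proof.
move=> hpsi /matrixP E; apply/matrixP => i j; rewrite !mxE.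
have := E i j; rewrite !mxE => /eqP; rewrite -subr_eq0 -resB => /eqP /(maxE hB) H.
apply/eqP; rewrite -subr_eq0 -resB -rmorphB; apply/eqP/(maxE hC); exact: hpsi.
Qed.

Lemma unit_hom (A B : comUnitRingType) (phi : {rmorphism A -> B}) (a : A) :
  maxideal (phi a) -> maxideal a.
Proof. by rewrite /maxideal; apply: contra => /(rmorph_unit phi). Qed.

Section Main.
Variables (A B C : comUnitRingType) (phi : {rmorphism A -> B}) (psi : {rmorphism B -> C}).
Hypotheses (hA : local_ring A) (hB : local_ring B) (hC : local_ring C).
Hypotheses (lphi : local_hom phi) (lpsi : local_hom psi).
Hypothesis surj : forall b : B, exists a : A, phi a = b.
Variables (eB : nat) (yB : 'I_eB -> B) (bB : cotangent_basis yB).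

Lemma phi_facts e (x : 'I_e -> A) : cotangent_basis x ->
  exists M, coords yB (fun i => phi (x i)) M /\
   exists P : 'M[A]_(eB, e), map_mx (res hB) (map_mx phi P) *m map_mx (res hB) M = 1%:M
     /\ map_mx (res hC) (map_mx psi (map_mx phi P)) *m map_mx (res hC) (map_mx psi M) = 1%:M.
Proof.
move=> bx.
have [M hM] : exists M, coords yB (fun i => phi (x i)) M.
  by apply: coords_exist => // i; apply: lphi; apply: basis_max bx i.
exists M; split => //.
have [a ha] := fin_all_exists (fun k : 'I_eB => surj (yB k)).
have [P hP] : exists P, coords x a P.
  apply: coords_exist => // k; apply: (unit_hom (phi := phi)); rewrite ha.
  exact: basis_max bB k.
have hP' := coords_ext (coords_hom lphi hP) ha.
have hc := coords_comp hM hP'.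
have E := coords_uniq hB bB hc (coords_id yB).
exists P; split; first by rewrite -map_mxM E map_mx1.
by rewrite -!map_mxM (res_hom hC lpsi E) !map_mx1.
Qed.
End Main.

Theorem corollary3p10 (A B C : comUnitRingType)
    (phi : {rmorphism A -> B}) (psi : {rmorphism B -> C}) :
  noetherian A -> noetherian B -> noetherian C ->
  local_ring A -> local_ring B -> local_ring C ->
  local_hom phi -> local_hom psi ->
  (forall b : B, exists a : A, phi a = b) ->
  exists d1 d2 : nat,
    [/\ rd_is phi d1, rd_is psi d2 & rd_is (psi \o phi) (d1 + d2)%N].
Proof.
move=> nA nB nC hA hB hC lphi lpsi surj.
have [eA [xA bA]] := basis_exists hA nA.
have [eB [yB bB]] := basis_exists hB nB.
have [eC [zC bC]] := basis_exists hC nC.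
have [Q hQ] : exists Q, coords zC (fun k => psi (yB k)) Q.
  by apply: coords_exist => // k; apply: lpsi; apply: basis_max bB k.
pose r := \rank (map_mx (res hC) Q).
have reB : (r <= eB)%N by apply: rank_leq_row.
have eBA : (eB <= eA)%N.
  have [M [hM [P [E1 _]]]] := phi_facts (psi:=psi) hB hC lphi lpsi surj bB bA.
  have [_ <-] := full_rank_mul (1%:M : 'M_eB) E1.
  exact: rank_leq_row.
exists (eA - eB)%N, (eB - r)%N; split.
- split; first by exists eA, xA.
  move=> e x bx.
  have [M [hM [P [E1 _]]]] := phi_facts (psi:=psi) hB hC lphi lpsi surj bB bx.
  have := kernel_dim hB bB hM.
  have [_ ->] := full_rank_mul (1%:M : 'M_eB) E1.
  by have Ee := dim_unique hA bx bA; subst eA.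
- split; first by exists eB, yB.
  move=> e y hy.
  have [T hT] : exists T, coords yB y T by apply: coords_exist => //; apply: basis_max hy.
  have [T' hT'] : exists T, coords y yB T by apply: coords_exist => //; apply: basis_max bB.
  have hc := coords_comp hQ (coords_hom lpsi hT).
  have := kernel_dim hC (f := psi) bC hc.
  have E := coords_uniq hB bB (coords_comp hT hT') (coords_id yB).
  have E2 := res_hom hC lpsi E; rewrite !map_mxM !map_mx1 in E2.
  rewrite map_mxM; have [-> _] := full_rank_mul (map_mx (res hC) Q) E2.
  by have Ee := dim_unique hB hy bB; subst e.
- split; first by exists eA, xA.
  move=> e x bx.
  have [M [hM [P [E1 E2]]]] := phi_facts (psi:=psi) hB hC lphi lpsi surj bB bx.
  have hc := coords_comp hQ (coords_hom lpsi hM).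
  have := kernel_dim hC (f := psi \o phi) bC hc.
  rewrite map_mxM; have [-> _] := full_rank_mul (map_mx (res hC) Q) E2.
  have Ee := dim_unique hA bx bA; subst e.
  by rewrite addnBA // subnK.
Qed.
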